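(* For every $\alpha\in(0,1)$, neither $\overline{D}_\alpha^{\mathrm{test}}$ nor $\hat D_\alpha^{\mathrm{test}}$ is a quantum Rényi $\alpha$-divergence; that is, for each of these two functions (defined on $\bigcup_{d\in\mathbb N}\mathcal S(\mathbb C^d)\times\mathcal S(\mathbb C^d)$), it is not the case that it is both invariant under isometries and equal to the classical Rényi $\alpha$-divergence on every pair of commuting states.
   Context: $\mathcal S(\mathbb C^d)$ denotes the set of density operators on $\mathbb C^d$. A function $D^q_\alpha$ on $\bigcup_d\mathcal S(\mathbb C^d)\times\mathcal S(\mathbb C^d)$ is a quantum Rényi $\alpha$-divergence if $D_\alpha^q(V\varrho V^*\|V\sigma V^* )=D^q_\alpha(\varrho\|\sigma)$ for all isometries $V:\mathbb C^d\to\mathbb C^{d'}$, and whenever $\varrho=\sum_i p_i|i\rangle\langle i|$, $\sigma=\sum_i q_i|i\rangle\langle i|$ are diagonal in a common orthonormal basis, $D^q_\alpha(\varrho\|\sigma)=\frac{1}{\alpha-1}\log\sum_i p_i^\alpha q_i^{1-\alpha}$. A test is an operator $0\le T\le I$; $\mathcal T(X):=(\operatorname{Tr}XT,\operatorname{Tr}X(I-T))$; $D_\alpha^{\mathrm{test}}(\varrho\|\sigma):=\max_{0\le T\le I}D_\alpha(\mathcal T(\varrho)\|\mathcal T(\sigma))$ with $D_\alpha$ the classical Rényi divergence of the two-point distributions; $\overline{D}_\alpha^{\mathrm{test}}(\varrho\|\sigma):=\limsup_{n}\frac1n D_\alpha^{\mathrm{test}}(\varrho^{\otimes n}\|\sigma^{\otimes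 n})$ and $\hat D_\alpha^{\mathrm{test}}(\varrho\|\sigma):=\sup_{n}\frac1n D_\alpha^{\mathrm{test}}(\varrho^{\otimes n}\|\sigma^{\otimes n})$. *)

(* Defs.v *)
From HB Require Import structures.
From mathcomp Require Import all_boot all_order all_algebra.
From mathcomp Require Import all_classical all_reals.
From mathcomp Require Import ereal topology normedtype sequences exp.
From mathcomp.real_closed Require Import complex mxtens.
Set Implicit Arguments. Unset Strict Implicit. Unset Printing Implicit Defensive.
Import Order.TTheory GRing.Theory Num.Theory.
Local Open Scope ring_scope.
Local Open Scope classical_set_scope.

Section QuantumRenyi.
Variable R : realType.
Local Notation C := R[i].

Definition adj m n (A : 'M[C]_(m, n)) : 'M[C]_(n, m) := (map_mx conjc A)^T.

Definition psd n (A : 'M[C]_n) : Prop :=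
  forall v : 'cV[C]_n, 0 <= (adj v *m A *m v) 0 0.

Definition density n (rho : 'M[C]_n) : Prop := psd rho /\ \tr rho = 1.

Definition test n (T : 'M[C]_n) : Prop := psd T /\ psd (1%:M - T).

Definition isometry d d' (V : 'M[C]_(d', d)) : Prop := adj V *m V = 1%:M.

Definition RC (x : R) : C := Complex x 0.

Definition diagR d (p : 'I_d -> R) : 'M[C]_d := diag_mx (\row_i RC (p i)).

Definition renyi (alpha : R) k (p q : 'I_k -> R) : \bar R :=
  let s := \sum_(i < k) (p i `^ alpha * q i `^ (1 - alpha)) in
  if ((alpha < 1) && (s == 0)) ||
     ((1 < alpha) && [exists i, (p i != 0) && (q i == 0)])
  then +oo%E
  else ((alpha - 1)^-1 * ln s)%:E.

Definition meas n (T X : 'M[C]_n) : 'I_2 -> R :=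
  fun i => if i == ord0 then complex.Re (\tr (X *m T)) else complex.Re (\tr (X *m (1%:M - T))).

(* D_alpha^test: max over tests (written as a supremum, which is attained) *)
Definition Dtest (alpha : R) n (rho sigma : 'M[C]_n) : \bar R :=
  ereal_sup [set renyi alpha (meas T rho) (meas T sigma) | T in @test n].

(* regularizations, with the n-th term (1/n) D^test(rho^{(x)n} || sigma^{(x)n}), n >= 1 *)
Definition Dtest_term (alpha : R) d (rho sigma : 'M[C]_d) (n : nat) : \bar R :=
  ((n.+1%:R)^-1)%:E * Dtest alpha (rho ^t n.+1) (sigma ^t n.+1).

Definition Dbar_test (alpha : R) d (rho sigma : 'M[C]_d) : \bar R :=
  limn_esup (Dtest_term alpha rho sigma).

Definition Dhat_test (alpha : R) d (rho sigma : 'M[C]_d) : \bar R :=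
  ereal_sup [set Dtest_term alpha rho sigma n | n in [set: nat]].

Definition quantum_renyi (alpha : R)
    (D : forall d : nat, 'M[C]_d -> 'M[C]_d -> \bar R) : Prop :=
  (forall d d' (V : 'M[C]_(d', d)) (rho sigma : 'M[C]_d),
      isometry V -> density rho -> density sigma ->
      D d' (V *m rho *m adj V) (V *m sigma *m adj V) = D d rho sigma) /\
  (forall d (U : 'M[C]_d) (p q : 'I_d -> R),
      adj U *m U = 1%:M ->
      density (U *m diagR p *m adj U) -> density (U *m diagR q *m adj U) ->
      D d (U *m diagR p *m adj U) (U *m diagR q *m adj U) = renyi alpha p q).

End QuantumRenyi.

(* Main.v *)
Require Import Defs.
From HB Require Import structures.
From mathcomp Require Import all_boot all_order all_algebra.
From mathcomp Require Import all_classical all_reals.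
From mathcomp Require Import ereal topology normedtype sequences exp.
From mathcomp.real_closed Require Import complex mxtens.
From mathcomp Require Import ring lra.
Import Order.TTheory GRing.Theory Num.Theory.
Local Open Scope ring_scope.

Section Aux.
Variable R : realType.
Local Notation C := R[i].

Lemma key_box (w t a b : R) : 0 < w <= 1 -> 0 <= t <= 1 ->
  w * t <= a <= 1 - w + w * t -> w * t <= b <= 1 - w + w * t ->
  w / 4 <= a * b \/ w / 4 <= (1 - a) * (1 - b).
Proof.
move=> /andP[w0 w1] /andP[t0 t1] /andP[a0 a1] /andP[b0 b1].
have wt0 : 0 <= w * t by rewrite mulr_ge0 // ltW.
have wt1 : w * t <= w by rewrite ler_piMr // ltW.
have [ha|ha] := lerP (1/2) a; have [hb|hb] := lerP (1/2) b.
- left; have h1 : (1/2) * (1/2) <= a * b by apply: ler_pM => //; lra.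
  lra.
- have [ht|ht] := lerP (1/2) t; [left|right].
  + have h1 : (1/2) * b <= a * b by rewrite ler_wpM2r //; lra.
    have h2 : w * (1/2) <= w * t by rewrite ler_wpM2l //; lra.
    lra.
  + have h1 : (1 - a) * (1/2) <= (1 - a) * (1 - b) by rewrite ler_wpM2l //; lra.
    have h2 : w * (1/2) <= w * (1 - t) by rewrite ler_wpM2l //; lra.
    lra.
- have [ht|ht] := lerP (1/2) t; [left|right].
  + have h1 : a * (1/2) <= a * b by rewrite ler_wpM2l //; lra.
    have h2 : w * (1/2) <= w * t by rewrite ler_wpM2l //; lra.
    lra.
  + have h1 : (1/2) * (1 - b) <= (1 - a) * (1 - b) by rewrite ler_wpM2r //; lra.
    have h2 : w * (1/2) <= w * (1 - t) by rewrite ler_wpM2l //; lra.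
    lra.
- right; have h1 : (1/2) * (1/2) <= (1 - a) * (1 - b) by apply: ler_pM => //; lra.
  lra.
Qed.

Lemma Re_sum N (F : 'I_N -> C) : complex.Re (\sum_i F i) = \sum_i complex.Re (F i).
Proof. by apply: big_morph => [[x1 x2] [y1 y2]|]. Qed.

Lemma tr_diagR N (P : 'I_N -> R) (T : 'M[C]_N) :
  complex.Re (\tr (diagR P *m T)) = \sum_i P i * complex.Re (T i i).
Proof.
rewrite /diagR mul_diag_mx /mxtrace Re_sum; apply: eq_bigr => i _.
rewrite !mxE /RC; case: (T i i) => x y /=.
by rewrite mul0r subr0.
Qed.

Lemma psd_diag N (A : 'M[C]_N) i : psd A -> 0 <= A i i.
Proof.
move=> /(_ (delta_mx i ord0)).
have -> : adj (delta_mx i ord0 : 'cV[C]_N) = delta_mx ord0 i.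
  by apply/matrixP => j k; rewrite !mxE conjc_nat andbC.
by rewrite -rowE -colE !mxE.
Qed.

Lemma test_diag N (T : 'M[C]_N) i : test T -> 0 <= complex.Re (T i i) <= 1.
Proof.
move=> [T0 T1]; have := psd_diag _ _ i T0; have := psd_diag _ _ i T1.
rewrite !mxE eqxx mulr1n !lecE; case: (T i i) => x y /=.
move=> /andP[_ h1] /andP[_ h2]; apply/andP; split => //. lra.
Qed.


Lemma box_lemma N (P : 'I_N -> R) (T : 'M[C]_N) om w :
  (forall i, 0 <= P i) -> \sum_i P i = 1 -> P om = w -> test T ->
  w * complex.Re (T om om) <= complex.Re (\tr (diagR P *m T))
    <= 1 - w + w * complex.Re (T om om).
Proof.
move=> P0 P1 Pom hT.
have tb := fun i => test_diag _ T i hT.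
rewrite tr_diagR (bigD1 om) //= Pom.
rewrite (bigD1 om) //= Pom in P1.
have S0 : 0 <= \sum_(i < N | i != om) P i * complex.Re (T i i).
  by apply: sumr_ge0 => i _; have /andP[h _] := tb i; rewrite mulr_ge0.
have S1 : \sum_(i < N | i != om) P i * complex.Re (T i i) <= \sum_(i < N | i != om) P i.
  by apply: ler_sum => i _; have /andP[_ h] := tb i; rewrite ler_piMr.
apply/andP; split; lra.
Qed.

Lemma le_ln_pow (alpha m u v : R) : 0 < alpha < 1 -> alpha <= m -> 1 - alpha <= m ->
  0 < u <= 1 -> 0 < v <= 1 ->
  m * ln (u * v) <= ln (u `^ alpha * v `^ (1 - alpha)).
Proof.
move=> /andP[a0 a1] m1 m2 /andP[u0 u1] /andP[v0 v1].
have pu : 0 < u `^ alpha by rewrite powR_gt0.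
have pv : 0 < v `^ (1 - alpha) by rewrite powR_gt0.
rewrite lnM ?posrE //; rewrite lnM ?posrE //.
rewrite (ln_powR u) (ln_powR v).
have lu := ln_le0 u1; have lv := ln_le0 v1.
nra.
Qed.

Lemma s_lower (alpha w t a b : R) : 0 < alpha < 1 -> 0 < w <= 1 -> 0 <= t <= 1 ->
  w * t <= a <= 1 - w + w * t -> w * t <= b <= 1 - w + w * t ->
  0 < a `^ alpha * b `^ (1 - alpha) + (1 - a) `^ alpha * (1 - b) `^ (1 - alpha) /\
  Num.max alpha (1 - alpha) * ln (w / 4) <=
    ln (a `^ alpha * b `^ (1 - alpha) + (1 - a) `^ alpha * (1 - b) `^ (1 - alpha)).
Proof.
move=> ha hw ht hA hB.
have m1 : alpha <= Num.max alpha (1 - alpha) by rewrite le_max lexx.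
have m2 : 1 - alpha <= Num.max alpha (1 - alpha) by rewrite le_max lexx orbT.
have m0 : 0 <= Num.max alpha (1 - alpha).
  by apply: le_trans m1; case/andP: ha => /ltW.
move: hw ht hA hB => /andP[w0 w1] /andP[t0 t1] /andP[a0 a1] /andP[b0 b1].
have wt0 : 0 <= w * t by rewrite mulr_ge0 // ltW.
have wt1 : w * t <= w by rewrite ler_piMr // ltW.
have w40 : 0 < w / 4 by rewrite divr_gt0.
have pge0 := fun x y => mulr_ge0 (powR_ge0 x alpha) (powR_ge0 y (1 - alpha)).
case: (key_box w t a b); rewrite ?w0 ?w1 ?t0 ?t1 ?a0 ?a1 ?b0 ?b1 // => h.
- have ap : 0 < a.
    by rewrite lt_neqAle; apply/andP; split; [apply/eqP => ea; move: h; rewrite -ea mul0r; lra|lra].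
  have bp : 0 < b.
    by rewrite lt_neqAle; apply/andP; split; [apply/eqP => eb; move: h; rewrite -eb mulr0; lra|lra].
  have xp : 0 < a `^ alpha * b `^ (1 - alpha) by rewrite mulr_gt0 // powR_gt0.
  have sp : 0 < a `^ alpha * b `^ (1 - alpha) + (1 - a) `^ alpha * (1 - b) `^ (1 - alpha).
    by rewrite ltr_wpDr // pge0.
  split => //.
  apply: (le_trans (y := ln (a `^ alpha * b `^ (1 - alpha)))); last first.
    by rewrite ler_ln ?posrE // lerDl pge0.
  have hu : 0 < a <= 1 by apply/andP; split => //; lra.
  have hv : 0 < b <= 1 by apply/andP; split => //; lra.
  apply: le_trans (le_ln_pow _ _ _ _ ha m1 m2 hu hv).
  by apply: ler_wpM2l => //; rewrite ler_ln ?posrE // mulr_gt0.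
- have ap : 0 < 1 - a.
    by rewrite lt_neqAle; apply/andP; split; [apply/eqP => ea; move: h; rewrite -ea mul0r; lra|lra].
  have bp : 0 < 1 - b.
    by rewrite lt_neqAle; apply/andP; split; [apply/eqP => eb; move: h; rewrite -eb mulr0; lra|lra].
  have xp : 0 < (1 - a) `^ alpha * (1 - b) `^ (1 - alpha) by rewrite mulr_gt0 // powR_gt0.
  have sp : 0 < a `^ alpha * b `^ (1 - alpha) + (1 - a) `^ alpha * (1 - b) `^ (1 - alpha).
    by rewrite ltr_wpDl // pge0.
  split => //.
  apply: (le_trans (y := ln ((1 - a) `^ alpha * (1 - b) `^ (1 - alpha)))); last first.
    by rewrite ler_ln ?posrE // lerDr pge0.
  have hu : 0 < (1 - a) <= 1 by apply/andP; split => //; lra.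
  have hv : 0 < (1 - b) <= 1 by apply/andP; split => //; lra.
  apply: le_trans (le_ln_pow _ _ _ _ ha m1 m2 hu hv).
  by apply: ler_wpM2l => //; rewrite ler_ln ?posrE // mulr_gt0.
Qed.


Lemma renyi2_bound (alpha w t a b : R) : 0 < alpha < 1 -> 0 < w <= 1 -> 0 <= t <= 1 ->
  w * t <= a <= 1 - w + w * t -> w * t <= b <= 1 - w + w * t ->
  (renyi alpha (fun i : 'I_2 => if i == ord0 then a else (1 - a)%R)
              (fun i : 'I_2 => if i == ord0 then b else (1 - b)%R)
   <= ((alpha - 1)^-1 * (Num.max alpha (1 - alpha) * ln (w / 4)))%R%:E)%E.
Proof.
move=> ha hw ht hA hB.
have [sp sl] := s_lower _ _ _ _ _ ha hw ht hA hB.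
have a1' : (1 < alpha) = false.
  by apply/negbTE; rewrite -leNgt; case/andP: ha => _ /ltW.
rewrite /renyi !big_ord_recl big_ord0 /= addr0 (negbTE (lt0r_neq0 sp)) a1' andbF /=.
rewrite lee_fin; apply: ler_wnM2l => //.
by rewrite invr_le0 subr_le0; case/andP: ha => _ /ltW.
Qed.

Lemma Re_sub (x y : C) : complex.Re (x - y) = complex.Re x - complex.Re y.
Proof. by case: x; case: y. Qed.

Lemma Re_tr_diagR N (P : 'I_N -> R) : complex.Re (\tr (diagR P)) = \sum_i P i.
Proof. by rewrite mxtrace_diag Re_sum; apply: eq_bigr => i _; rewrite mxE. Qed.

Lemma meas_eq N (P : 'I_N -> R) (T : 'M[C]_N) : \sum_i P i = 1 ->
  meas T (diagR P) = fun i => if i == ord0 then complex.Re (\tr (diagR P *m T))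
                              else 1 - complex.Re (\tr (diagR P *m T)).
Proof.
move=> P1; apply/funext => i; rewrite /meas; case: ifP => // _.
by rewrite mulmxBr mulmx1 linearB /= Re_sub Re_tr_diagR P1.
Qed.

Lemma Dtest_bound (alpha : R) N (P Q : 'I_N -> R) om (w : R) : 0 < alpha < 1 -> 0 < w <= 1 ->
  (forall i, 0 <= P i) -> \sum_i P i = 1 -> P om = w ->
  (forall i, 0 <= Q i) -> \sum_i Q i = 1 -> Q om = w ->
  (Dtest alpha (diagR P) (diagR Q) <=
     ((alpha - 1)^-1 * (Num.max alpha (1 - alpha) * ln (w / 4)))%R%:E)%E.
Proof.
move=> ha hw P0 P1 Pw Q0 Q1 Qw.
apply: ge_ereal_sup => _ [T hT <-].
rewrite (meas_eq _ _ T P1) (meas_eq _ _ T Q1).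
apply: (renyi2_bound _ _ (complex.Re (T om om))) => //.
- exact: test_diag.
- exact: box_lemma.
- exact: box_lemma.
Qed.


Lemma tens_diagR m n (P : 'I_m -> R) (Q : 'I_n -> R) :
  diagR P *t diagR Q =
  diagR (fun k => P (mxtens_unindex k).1 * Q (mxtens_unindex k).2).
Proof.
apply/matrixP => k l.
case: (mxtens_indexP k) => i j; case: (mxtens_indexP l) => i' j'.
rewrite tensmxE /diagR !mxE !mxtens_indexK /=.
rewrite (inj_eq (can_inj (@mxtens_indexK _ _))) xpair_eqE.
rewrite /RC; case: (i == i'); case: (j == j'); rewrite /= ?mulr0n ?mulr1n ?mul0r ?mulr0 //.
by apply/eqP; rewrite eq_complex /= !mulr0 !mul0r subr0 addr0 !eqxx.
Qed.

Definition i1 : 'I_3 := @Ordinal 3 1 isT.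

Fixpoint omega k : 'I_(3 ^ k.+1) :=
  match k return 'I_(3 ^ k.+1) with
  | 0 => i1
  | k'.+1 => mxtens_index (i1, omega k')
  end.

Lemma tens_inv (p : 'I_3 -> R) (w1 : R) k : (forall i, 0 <= p i) -> \sum_i p i = 1 ->
  p i1 = w1 ->
  exists P : 'I_(3 ^ k.+1) -> R, diagR p ^t k.+1 = diagR P /\ (forall i, 0 <= P i) /\
    \sum_i P i = 1 /\ P (omega k) = w1 ^+ k.+1.
Proof.
move=> p0 p1 pw; elim: k => [|k [P [eP [P0 [P1 Pw]]]]].
  by exists p; rewrite expr1.
exists (fun k => p (mxtens_unindex k).1 * P (mxtens_unindex k).2); split.
  by rewrite ntensmxSS eP tens_diagR.
split; first by move=> i; rewrite mulr_ge0.
split; first by rewrite -mxtens.mulr_sum p1 P1 mulr1.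
have e : mxtens_unindex (omega k.+1) = (i1, omega k).
  exact: (@mxtens_indexK 3 (3 ^ k.+1) (i1, omega k)).
by cbv beta; rewrite e /= Pw pw [in RHS]exprS.
Qed.

Lemma Im_sum N (F : 'I_N -> C) : complex.Im (\sum_i F i) = \sum_i complex.Im (F i).
Proof. by apply: big_morph => [[x1 x2] [y1 y2]|]. Qed.

Lemma adj1 n : adj (1%:M : 'M[C]_n) = 1%:M.
Proof. by apply/matrixP => i j; rewrite !mxE conjc_nat eq_sym. Qed.

Lemma density_diagR N (P : 'I_N -> R) : (forall i, 0 <= P i) -> \sum_i P i = 1 ->
  density (diagR P).
Proof.
move=> P0 P1; split.
  move=> v; rewrite /diagR mul_mx_diag mxE; apply: sumr_ge0 => j _.
  rewrite !mxE /RC; have := P0 j; case: (v j 0) => x y /= hp.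
  rewrite lecE /=; apply/andP; split; first by apply/eqP; ring.
  have -> : (x * P j - - y * 0) * x - (x * 0 + - y * P j) * y = P j * (x * x + y * y) by ring.
  by apply: mulr_ge0 => //; nra.
apply/eqP; rewrite mxtrace_diag eq_complex Re_sum Im_sum /=.
under eq_bigr do rewrite mxE.
under [X in _ && (X == _)]eq_bigr do rewrite mxE.
by rewrite /RC /= P1 eqxx big1_eq eqxx.
Qed.

End Aux.

Section Main.
Variable R : realType.
Variable alpha : R.
Hypothesis ha : 0 < alpha < 1.
Local Notation C := R[i].

Let m := Num.max alpha (1 - alpha).
Let L := (1 + ln (4 : R)) / (1 - m).
Let w1 := expR (- L).
Let p : 'I_3 -> R := fun i => if (i : nat) == 1%N then w1 else if (i : nat) == 0%N then 1 - w1 else 0.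
Let q : 'I_3 -> R := fun i => if (i : nat) == 1%N then w1 else if (i : nat) == 0%N then 0 else 1 - w1.
Let c := (alpha - 1)^-1 * (m * (ln w1 - ln 4)).

Let m_lt1 : m < 1.
Proof. by rewrite /m gt_max; case/andP: ha => a0 a1; apply/andP; split; lra. Qed.

Let m_ge : alpha <= m /\ 1 - alpha <= m.
Proof. by split; rewrite /m le_max lexx ?orbT. Qed.

Let l4 : 0 <= ln (4 : R).
Proof. by apply: ln_ge0; rewrite (ler_nat _ 1 4). Qed.

Let L_gt0 : 0 < L.
Proof. by apply: divr_gt0; [have := l4; lra | rewrite subr_gt0 m_lt1]. Qed.

Let w1_gt0 : 0 < w1. Proof. exact: expR_gt0. Qed.
Let w1_le1 : w1 <= 1. Proof. by rewrite /w1 expR_le1 oppr_le0 ltW. Qed.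
Let lnw1 : ln w1 = - L. Proof. by rewrite /w1 expRK. Qed.

Let p0 i : 0 <= p i.
Proof. by have := w1_gt0; have := w1_le1; rewrite /p; case: ifP => _; [|case: ifP => _]; lra. Qed.
Let q0 i : 0 <= q i.
Proof. by have := w1_gt0; have := w1_le1; rewrite /q; case: ifP => _; [|case: ifP => _]; lra. Qed.
Let p1 : \sum_i p i = 1.
Proof. by rewrite !big_ord_recl big_ord0 /p /=; lra. Qed.
Let q1 : \sum_i q i = 1.
Proof. by rewrite !big_ord_recl big_ord0 /q /=; lra. Qed.
Let pw : p i1 = w1. Proof. by []. Qed.
Let qw : q i1 = w1. Proof. by []. Qed.

Let c_lt : c < (alpha - 1)^-1 * ln w1.
Proof.
have an : (alpha - 1)^-1 < 0 by rewrite invr_lt0 subr_lt0; case/andP: ha.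
rewrite /c ltr_nM2l // lnw1.
have eL : L * (1 - m) = 1 + ln 4.
  rewrite /L mulrAC -mulrA divff ?mulr1 //; by rewrite subr_eq0 eq_sym lt_eqF // m_lt1.
have h3 : 0 <= (1 - m) * ln 4.
  by apply: mulr_ge0; [rewrite subr_ge0 ltW // m_lt1 | apply: ln_ge0; rewrite (ler_nat _ 1 4)].
nra.
Qed.

Let renyi_pq : renyi alpha p q = ((alpha - 1)^-1 * ln w1)%:E.
Proof.
case/andP: ha => a0 a1.
have e : w1 `^ alpha * w1 `^ (1 - alpha) = w1.
  rewrite -powRD; last by apply/implyP => _; rewrite gt_eqF.
  by rewrite addrC subrK powRr1 // ltW.
rewrite /renyi !big_ord_recl big_ord0 /p /q /=.
rewrite !powR0 ?mulr0 ?mul0r ?add0r ?addr0 ?e; try by rewrite gt_eqF // subr_gt0.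
rewrite (gt_eqF w1_gt0) andbF /=.
by have -> : (1 < alpha) = false by apply/negbTE; rewrite -leNgt ltW.
Qed.

Let term_bound n : (Dtest_term alpha (diagR p) (diagR q) n <= c%:E)%E.
Proof.
have [P [eP [P0 [P1 Pw]]]] := tens_inv _ p w1 n p0 p1 pw.
have [Q [eQ [Q0 [Q1 Qw]]]] := tens_inv _ q w1 n q0 q1 qw.
rewrite /Dtest_term eP eQ.
have hw : 0 < w1 ^+ n.+1 <= 1 by rewrite exprn_gt0 // exprn_ile1 // ltW.
have hb := Dtest_bound _ _ _ _ _ _ _ ha hw P0 P1 Pw Q0 Q1 Qw.
apply: le_trans (lee_wpmul2l _ hb) _; first by rewrite lee_fin invr_ge0.
rewrite -EFinM lee_fin -/m.
set N := n.+1%:R.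
have N1 : 1 <= N by rewrite /N (ler_nat _ 1 n.+1).
have N0 : 0 < N by lra.
have eln : ln (w1 ^+ n.+1 / 4) = N * ln w1 - ln 4.
  rewrite lnM ?posrE ?exprn_gt0 ?invr_gt0 //; rewrite lnXn // lnV ?posrE //.
  by rewrite /N mulr_natl.
rewrite eln.
have an : (alpha - 1)^-1 < 0 by rewrite invr_lt0 subr_lt0; case/andP: ha.
have m0 : 0 <= m by apply: le_trans (proj1 m_ge); case/andP: ha => /ltW.
have l4' : 0 <= ln (4 : R) by apply: ln_ge0; rewrite (ler_nat _ 1 4).
set K := (alpha - 1)^-1 * m.
have K0 : K <= 0 by rewrite /K mulr_le0_ge0 // ltW.
have e1 : N^-1 * ((alpha - 1)^-1 * (m * (N * ln w1 - ln 4))) = K * ln w1 - (K * ln 4) * N^-1.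
  by rewrite /K; set z := (alpha - 1)^-1; field; exact: lt0r_neq0.
rewrite e1 /c -/K.
have Ni : 0 < N^-1 <= 1 by rewrite invr_gt0 N0 invf_le1.
have Kl : K * ln 4 <= 0 by rewrite mulr_le0_ge0.
have -> : (alpha - 1)^-1 * (m * (ln w1 - ln 4)) = K * ln w1 - K * ln 4 by rewrite /K; ring.
have h : K * ln 4 * 1 <= K * ln 4 * N^-1 := ler_wnM2l Kl (proj2 (andP Ni)).
by rewrite mulr1 in h; rewrite lerD2l lerN2.
Qed.

Let not_qr (D : forall d : nat, 'M[C]_d -> 'M[C]_d -> \bar R) :
  (D 3%N (diagR p) (diagR q) <= c%:E)%E -> ~ quantum_renyi alpha D.
Proof.
move=> hD [_ H].
have := H 3 1%:M p q; rewrite adj1 !mul1mx !mulmx1 => H3.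
have := H3 erefl (density_diagR _ _ _ p0 p1) (density_diagR _ _ _ q0 q1).
rewrite renyi_pq => eD; move: hD; rewrite eD lee_fin => hc.
by have := lt_le_trans c_lt hc; rewrite ltxx.
Qed.

Lemma main_both : ~ quantum_renyi alpha (@Dbar_test R alpha) /\
  ~ quantum_renyi alpha (@Dhat_test R alpha).
Proof.
split; apply: not_qr.
- rewrite /Dbar_test limn_esup_lim; apply: lime_le; first exact: is_cvg_esups.
  apply: nearW => k; apply: ge_ereal_sup => _ [j _ <-]; exact: term_bound.
- by apply: ge_ereal_sup => _ [n _ <-]; exact: term_bound.
Qed.
End Main.

Theorem mainTheorem4 (R : realType) (alpha : R) :
  0 < alpha < 1 ->
  ~ quantum_renyi alpha (@Dbar_test R alpha) /\
  ~ quantum_renyi alpha (@Dhat_test R alpha).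
Proof. by move=> ha; exact: (@main_both R alpha ha). Qed.
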